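(* Let $V$ be a finite nonempty set and $U\subseteq V$. For every $x\in X_V$, the vector $x'\in\{0,1\}^{P_V}$ defined by $x'_{pq}=0$ if $pq\in U\times(V\setminus U)$ and $x'_{pq}=x_{pq}$ otherwise, satisfies $x'\in X_V$.
   Context: $P_V=\{pq\in V^2\mid p\neq q\}$. $X_V$ is the set of all $x\in\{0,1\}^{P_V}$ such that $x_{pq}+x_{qr}-x_{pr}\le 1$ for all pairwise distinct $p,q,r\in V$. *)

(* Defs.v *)
From mathcomp Require Import all_boot.
Set Implicit Arguments. Unset Strict Implicit. Unset Printing Implicit Defensive.

Definition PV (V : finType) := {pq : V * V | pq.1 != pq.2}.

(* {0,1}^{P_V} : 0/1 vectors indexed by P_V, encoded as nat-valued functions
   with values in {0,1} *)
Definition binvec (V : finType) (x : PV V -> nat) : Prop :=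
  forall pq, x pq <= 1.

Definition coord (V : finType) (x : PV V -> nat) (p q : V) (h : p != q) : nat :=
  x (exist _ (p, q) h).

Definition XV (V : finType) (x : PV V -> nat) : Prop :=
  binvec x /\
  forall (p q r : V) (hpq : p != q) (hqr : q != r) (hpr : p != r),
    (coord x hpq + coord x hqr <= 1 + coord x hpr)%N.

Definition cut_zero (V : finType) (U : {set V}) (x : PV V -> nat) : PV V -> nat :=
  fun pq => if ((val pq).1 \in U) && ((val pq).2 \notin U) then 0 else x pq.

(* Main.v *)
Require Import Defs.
From mathcomp Require Import all_boot.
From mathcomp Require Import zify.

Theorem lemma5p2 (V : finType) (HV : 0 < #|V|) (U : {set V})
  (x : PV V -> nat) :
  XV x -> XV (cut_zero U x).
Proof.
move=> [Hb Ht]; split.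
  move=> pq; rewrite /cut_zero; case: ifP => _ //; exact: Hb.
move=> p q r hpq hqr hpr.
have := Ht p q r hpq hqr hpr.
have b1 := Hb (exist _ (p, q) hpq).
have b2 := Hb (exist _ (q, r) hqr).
have b3 := Hb (exist _ (p, r) hpr).
rewrite /coord /cut_zero /=.
case: (p \in U); case: (q \in U); case: (r \in U) => /=; lia.
Qed.
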